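(* Let $\mathbb{A}$ be a 2-category and $p:e\to b$ a 1-cell such that $\mathbb{A}$ has the two-dimensional cokernel diagram of $p$, a right Kan extension $(t,\gamma)$ of $p$ along $p$ exists, and it is preserved by $\delta^0:b\to b\uparrow_pb$. Let $\mathsf{T}$ be the codensity monad of $p$. Then $\mathbb{A}$ has an Eilenberg–Moore object of $\mathsf{T}$ if and only if $\mathbb{A}$ has a lax descent object of the two-dimensional cokernel diagram of $p$, and in that case the semantic factorization $p=u\,p^{\mathsf{T}}$ of $p$ is isomorphic to the semantic lax descent factorization $p=d\,p^{H}$ of $p$, i.e. there is an isomorphism $\varphi:L\to b^{\mathsf{T}}$ with $u\varphi=d$ and $\varphi p^H=p^{\mathsf{T}}$.
   Context: A 2-category is a $\mathbf{Cat}$-enriched category; composition of 1-cells is juxtaposition, vertical composition of 2-cells is $\cdot$, horizontal composition is $\ast$, $\mathrm{id}_f$ is the identity 2-cell on $f$. Opcomma object of $p$ along itself: an object $b\uparrow_p b$ with 1-cells $\delta^0,\delta^1:b\to b\uparrow_p b$ and a 2-cell $\alpha:\delta^1p\Rightarrow\delta^0p$ such that for every object $y$ the functor $h\mapsto(h\delta^0,h\delta^1,\mathrm{id}_h\ast\alpha)$, $\xi\mapsto(\xi\ast\mathrm{id}_{\delta^0},\xi\ast\mathrm{id}_{\delta^1})$ is an isomorphism from $\mathbb{A}(b\uparrow_p b,y)$ onto the category of triples $(h_0,h_1:b\to y,\ \beta:h_1p\Rightarrow h_0p)$ with morphisms pairs of 2-cells $(\xi_0:h_0\Rightarrow h_0',\xi_1:h_1\Rightarrow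 h_1')$ satisfying $(\xi_0\ast\mathrm{id}_p)\cdot\beta=\beta'\cdot(\xi_1\ast\mathrm{id}_p)$. Two-dimensional pushout of a span $f_0:c\to c_0$, $f_1:c\to c_1$: an object $P$ with $q_0:c_0\to P$, $q_1:c_1\to P$, $q_0f_0=q_1f_1$, such that for every $y$, $k\mapsto(kq_0,kq_1)$ is an isomorphism from $\mathbb{A}(P,y)$ onto the category of pairs $(k_0,k_1)$ with $k_0f_0=k_1f_1$, whose morphisms are pairs of 2-cells $(\xi_0,\xi_1)$ with $\xi_0\ast\mathrm{id}_{f_0}=\xi_1\ast\mathrm{id}_{f_1}$. $\mathbb{A}$ has the two-dimensional cokernel diagram of $p$ if it has an opcomma object $b\uparrow_p b$ and a two-dimensional pushout $b\uparrow_pb\uparrow_pb$ of the span $(\delta^0,\delta^1)$, with 1-cells $D^0,D^2$ satisfying $D^2\delta^0=D^0\delta^1$; $D^1$ is the unique 1-cell with $D^1\delta^1=D^2\delta^1$, $D^1\delta^0=D^0\delta^0$, $\mathrm{id}_{D^1}\ast\alpha=(\mathrm{id}_{D^0}\ast\alpha)\cdot(\mathrm{id}_{D^2}\ast\alpha)$; $s^0:b\uparrow_pb\to b$ is the unique 1-cell with $s^0\delta^0=s^0\delta^1=\mathrm{id}_b$, $\mathrm{id}_{s^0}\ast\alpha=\mathrm{id}_p$. The two-dimensional cokernel diagram of $p$ is the diagram formed by $b,b\uparrow_pb,b\uparrow_pb\uparrow_pb$ and $\delta^0,\delta^1,s^0,D^0,D^1,D^2$. Lax descent object: for an object $y$,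 $\mathrm{Desc}_p(y)$ has objects pairs $(h:y\to b,\beta:\delta^1h\Rightarrow\delta^0h)$ with $(\mathrm{id}_{D^0}\ast\beta)\cdot(\mathrm{id}_{D^2}\ast\beta)=\mathrm{id}_{D^1}\ast\beta$ and $\mathrm{id}_{s^0}\ast\beta=\mathrm{id}_h$, and morphisms $(h_1,\beta_1)\to(h_0,\beta_0)$ the 2-cells $\xi:h_1\Rightarrow h_0$ with $\beta_0\cdot(\mathrm{id}_{\delta^1}\ast\xi)=(\mathrm{id}_{\delta^0}\ast\xi)\cdot\beta_1$. A lax descent object of the two-dimensional cokernel diagram is an object $L$ with $d:L\to b$ and $\Psi:\delta^1d\Rightarrow\delta^0d$ such that for each $y$ the functor $g\mapsto(dg,\Psi\ast\mathrm{id}_g)$, $\xi\mapsto\mathrm{id}_d\ast\xi$ is an isomorphism $\mathbb{A}(y,L)\to\mathrm{Desc}_p(y)$. Since $(p,\alpha)\in\mathrm{Desc}_p(e)$, there is a unique $p^H:e\to L$ with $dp^H=p$ and $\Psi\ast\mathrm{id}_{p^H}=\alpha$; $p=d\,p^H$ is the semantic lax descent factorization of $p$. Right Kan extension of $f:z\to y$ along $g:z\to w$: a pair $(r,\gamma:rg\Rightarrow f)$ such that for each $k:w\to y$, $\beta\mapsto\gamma\cdot(\beta\ast\mathrm{id}_g)$ is a bijection from 2-cells $k\Rightarrow r$ to 2-cells $kg\Rightarrow f$; a 1-cell $\delta$ preserves it if $(\delta r,\mathrm{id}_\delta\ast\gamma)$ is a right Kan extension of $\delta f$ along $g$. Codensity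 monad $\mathsf{T}=(b,t,m,\eta)$: $m:tt\Rightarrow t$ unique with $\gamma\cdot(m\ast\mathrm{id}_p)=\gamma\cdot(\mathrm{id}_t\ast\gamma)$, $\eta:\mathrm{id}_b\Rightarrow t$ unique with $\gamma\cdot(\eta\ast\mathrm{id}_p)=\mathrm{id}_p$. Eilenberg–Moore object: for $y$, $\mathrm{Alg}_{\mathsf{T}}(y)$ has objects $(h:y\to b,\beta:th\Rightarrow h)$ with $\beta\cdot(\mathrm{id}_t\ast\beta)=\beta\cdot(m\ast\mathrm{id}_h)$, $\beta\cdot(\eta\ast\mathrm{id}_h)=\mathrm{id}_h$, morphisms 2-cells $\xi:h_1\Rightarrow h_0$ with $\xi\cdot\beta_1=\beta_0\cdot(\mathrm{id}_t\ast\xi)$. An Eilenberg–Moore object is $b^{\mathsf{T}}$ with $u:b^{\mathsf{T}}\to b$, $\mu:tu\Rightarrow u$ such that $g\mapsto(ug,\mu\ast\mathrm{id}_g)$, $\xi\mapsto\mathrm{id}_u\ast\xi$ is an isomorphism $\mathbb{A}(y,b^{\mathsf{T}})\to\mathrm{Alg}_{\mathsf{T}}(y)$ for each $y$. The semantic factorization of $p$ is $p=u\,p^{\mathsf{T}}$ with $p^{\mathsf{T}}:e\to b^{\mathsf{T}}$ the unique 1-cell with $up^{\mathsf{T}}=p$ and $\mu\ast\mathrm{id}_{p^{\mathsf{T}}}=\gamma$. *)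

(* Defs.v *)
(* Vertical composition is totalised (its value on non-composable pairs
   is unconstrained junk); all axioms are conditioned on composability. *)
Record TwoCatData : Type := {
  ob : Type;
  hom : ob -> ob -> Type;
  cell : ob -> ob -> Type;
  src : forall a b, cell a b -> hom a b;
  tgt : forall a b, cell a b -> hom a b;
  id1 : forall a, hom a a;
  comp1 : forall a b c, hom b c -> hom a b -> hom a c;
  id2 : forall a b, hom a b -> cell a b;
  vcomp : forall a b, cell a b -> cell a b -> cell a b;
  hcomp : forall a b c, cell b c -> cell a b -> cell a c
}.

Arguments ob C : rename.
Arguments hom {C} _ _ : rename.
Arguments cell {C} _ _ : rename.
Arguments src {C a b} _ : rename.
Arguments tgt {C a b} _ : rename.
Arguments id1 {C} a : rename.
Arguments comp1 {C a b c} _ _ : rename.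
Arguments id2 {C a b} _ : rename.
Arguments vcomp {C a b} _ _ : rename.
Arguments hcomp {C a b c} _ _ : rename.

Declare Scope tc_scope.
Notation "g ∘ f" := (comp1 g f) (at level 30, right associativity) : tc_scope.
Notation "β ⋆ α" := (hcomp β α) (at level 35, right associativity) : tc_scope.
Notation "β · α" := (vcomp β α) (at level 45, right associativity) : tc_scope.
Open Scope tc_scope.

Record IsTwoCat (C : TwoCatData) : Prop := {
  src_id2 : forall (a b : ob C) (f : hom a b), src (id2 f) = f;
  tgt_id2 : forall (a b : ob C) (f : hom a b), tgt (id2 f) = f;
  src_vcomp : forall (a b : ob C) (α β : cell a b),
      tgt α = src β -> src (β · α) = src α;
  tgt_vcomp : forall (a b : ob C) (α β : cell a b),
      tgt α = src β -> tgt (β · α) = tgt β;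
  vcomp_assoc : forall (a b : ob C) (α β γ : cell a b),
      tgt α = src β -> tgt β = src γ -> γ · (β · α) = (γ · β) · α;
  vcomp_id_l : forall (a b : ob C) (α : cell a b), id2 (tgt α) · α = α;
  vcomp_id_r : forall (a b : ob C) (α : cell a b), α · id2 (src α) = α;
  comp1_assoc : forall (a b c d : ob C) (f : hom a b) (g : hom b c) (h : hom c d),
      h ∘ (g ∘ f) = (h ∘ g) ∘ f;
  comp1_id_l : forall (a b : ob C) (f : hom a b), id1 b ∘ f = f;
  comp1_id_r : forall (a b : ob C) (f : hom a b), f ∘ id1 a = f;
  src_hcomp : forall (a b c : ob C) (β : cell b c) (α : cell a b),
      src (β ⋆ α) = src β ∘ src α;
  tgt_hcomp : forall (a b c : ob C) (β : cell b c) (α : cell a b),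
      tgt (β ⋆ α) = tgt β ∘ tgt α;
  hcomp_assoc : forall (a b c d : ob C) (α : cell a b) (β : cell b c) (γ : cell c d),
      γ ⋆ (β ⋆ α) = (γ ⋆ β) ⋆ α;
  hcomp_id_l : forall (a b : ob C) (α : cell a b), id2 (id1 b) ⋆ α = α;
  hcomp_id_r : forall (a b : ob C) (α : cell a b), α ⋆ id2 (id1 a) = α;
  hcomp_id2 : forall (a b c : ob C) (f : hom a b) (g : hom b c),
      id2 g ⋆ id2 f = id2 (g ∘ f);
  interchange : forall (a b c : ob C) (α α' : cell a b) (β β' : cell b c),
      tgt α = src α' -> tgt β = src β' ->
      (β' · β) ⋆ (α' · α) = (β' ⋆ α') · (β ⋆ α)
}.

Section TwoCatNotions.
Context {C : TwoCatData}.

Definition is2 {a b : ob C} (f g : hom a b) (α : cell a b) : Prop :=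
  src α = f /\ tgt α = g.

Definition is_opcomma {e b : ob C} (p : hom e b)
    (bb : ob C) (d0 d1 : hom b bb) (al : cell e bb) : Prop :=
  is2 (d1 ∘ p) (d0 ∘ p) al /\
  forall y : ob C,
    (forall (h0 h1 : hom b y) (β : cell e y), is2 (h1 ∘ p) (h0 ∘ p) β ->
       exists! h : hom bb y, h ∘ d0 = h0 /\ h ∘ d1 = h1 /\ id2 h ⋆ al = β) /\
    (forall (h h' : hom bb y) (ξ0 ξ1 : cell b y),
       is2 (h ∘ d0) (h' ∘ d0) ξ0 -> is2 (h ∘ d1) (h' ∘ d1) ξ1 ->
       (ξ0 ⋆ id2 p) · (id2 h ⋆ al) = (id2 h' ⋆ al) · (ξ1 ⋆ id2 p) ->
       exists! ξ : cell bb y, is2 h h' ξ /\ ξ ⋆ id2 d0 = ξ0 /\ ξ ⋆ id2 d1 = ξ1).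

Definition is_2pushout {c c0 c1 : ob C} (f0 : hom c c0) (f1 : hom c c1)
    (P : ob C) (q0 : hom c0 P) (q1 : hom c1 P) : Prop :=
  q0 ∘ f0 = q1 ∘ f1 /\
  forall y : ob C,
    (forall (k0 : hom c0 y) (k1 : hom c1 y), k0 ∘ f0 = k1 ∘ f1 ->
       exists! k : hom P y, k ∘ q0 = k0 /\ k ∘ q1 = k1) /\
    (forall (k k' : hom P y) (ξ0 : cell c0 y) (ξ1 : cell c1 y),
       is2 (k ∘ q0) (k' ∘ q0) ξ0 -> is2 (k ∘ q1) (k' ∘ q1) ξ1 ->
       ξ0 ⋆ id2 f0 = ξ1 ⋆ id2 f1 ->
       exists! ξ : cell P y, is2 k k' ξ /\ ξ ⋆ id2 q0 = ξ0 /\ ξ ⋆ id2 q1 = ξ1).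

(* The two-dimensional cokernel diagram of p: opcomma object, pushout of
   (δ0, δ1) with q0 = D2, q1 = D0, and the induced D1 and s0
   (characterised by their defining properties, which determine them
   uniquely). *)
Definition is_2cokernel_diagram {e b : ob C} (p : hom e b)
    (bb : ob C) (d0 d1 : hom b bb) (al : cell e bb)
    (bbb : ob C) (D0 D1 D2 : hom bb bbb) (s0 : hom bb b) : Prop :=
  is_opcomma p bb d0 d1 al /\
  is_2pushout d0 d1 bbb D2 D0 /\
  (D1 ∘ d1 = D2 ∘ d1 /\ D1 ∘ d0 = D0 ∘ d0 /\
   id2 D1 ⋆ al = (id2 D0 ⋆ al) · (id2 D2 ⋆ al)) /\
  (s0 ∘ d0 = id1 b /\ s0 ∘ d1 = id1 b /\ id2 s0 ⋆ al = id2 p).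

Definition in_Desc {b bb bbb : ob C} (d0 d1 : hom b bb)
    (D0 D1 D2 : hom bb bbb) (s0 : hom bb b)
    (y : ob C) (h : hom y b) (β : cell y bb) : Prop :=
  is2 (d1 ∘ h) (d0 ∘ h) β /\
  (id2 D0 ⋆ β) · (id2 D2 ⋆ β) = id2 D1 ⋆ β /\
  id2 s0 ⋆ β = id2 h.

Definition is_lax_descent_object {b bb bbb : ob C} (d0 d1 : hom b bb)
    (D0 D1 D2 : hom bb bbb) (s0 : hom bb b)
    (L : ob C) (d : hom L b) (Ψ : cell L bb) : Prop :=
  in_Desc d0 d1 D0 D1 D2 s0 L d Ψ /\
  forall y : ob C,
    (forall (h : hom y b) (β : cell y bb), in_Desc d0 d1 D0 D1 D2 s0 y h β ->
       exists! g : hom y L, d ∘ g = h /\ Ψ ⋆ id2 g = β) /\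
    (forall (g1 g0 : hom y L) (ξ' : cell y b),
       is2 (d ∘ g1) (d ∘ g0) ξ' ->
       (Ψ ⋆ id2 g0) · (id2 d1 ⋆ ξ') = (id2 d0 ⋆ ξ') · (Ψ ⋆ id2 g1) ->
       exists! ξ : cell y L, is2 g1 g0 ξ /\ id2 d ⋆ ξ = ξ').

Definition is_right_kan {z y w : ob C} (f : hom z y) (g : hom z w)
    (r : hom w y) (γ : cell z y) : Prop :=
  is2 (r ∘ g) f γ /\
  forall (k : hom w y) (θ : cell z y), is2 (k ∘ g) f θ ->
    exists! β : cell w y, is2 k r β /\ γ · (β ⋆ id2 g) = θ.

(* Multiplication and unit of the codensity monad (characterised by their
   defining equations, which determine them uniquely). *)
Definition is_codensity_mult {e b : ob C} (p : hom e b) (t : hom b b)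
    (γ : cell e b) (m : cell b b) : Prop :=
  is2 (t ∘ t) t m /\ γ · (m ⋆ id2 p) = γ · (id2 t ⋆ γ).

Definition is_codensity_unit {e b : ob C} (p : hom e b) (t : hom b b)
    (γ : cell e b) (η : cell b b) : Prop :=
  is2 (id1 b) t η /\ γ · (η ⋆ id2 p) = id2 p.

Definition in_Alg {b : ob C} (t : hom b b) (m η : cell b b)
    (y : ob C) (h : hom y b) (β : cell y b) : Prop :=
  is2 (t ∘ h) h β /\
  β · (id2 t ⋆ β) = β · (m ⋆ id2 h) /\
  β · (η ⋆ id2 h) = id2 h.

Definition is_EM_object {b : ob C} (t : hom b b) (m η : cell b b)
    (bT : ob C) (u : hom bT b) (μ : cell bT b) : Prop :=
  in_Alg t m η bT u μ /\
  forall y : ob C,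
    (forall (h : hom y b) (β : cell y b), in_Alg t m η y h β ->
       exists! g : hom y bT, u ∘ g = h /\ μ ⋆ id2 g = β) /\
    (forall (g1 g0 : hom y bT) (ξ' : cell y b),
       is2 (u ∘ g1) (u ∘ g0) ξ' ->
       ξ' · (μ ⋆ id2 g1) = (μ ⋆ id2 g0) · (id2 t ⋆ ξ') ->
       exists! ξ : cell y bT, is2 g1 g0 ξ /\ id2 u ⋆ ξ = ξ').

Definition is_iso1 {a b : ob C} (f : hom a b) : Prop :=
  exists g : hom b a, g ∘ f = id1 a /\ f ∘ g = id1 b.

End TwoCatNotions.

(* Main.v *)
Require Import Defs.
From Stdlib Require Import Setoid.

Section Gen.
Context {C : TwoCatData} (HC : IsTwoCat C).

Lemma is2_id {a b : ob C} (f : hom a b) : is2 f f (id2 f).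
Proof. split; [apply (src_id2 _ HC) | apply (tgt_id2 _ HC)]. Qed.

Lemma is2_v {a b : ob C} (f g h : hom a b) (α β : cell a b) :
  is2 f g α -> is2 g h β -> is2 f h (β · α).
Proof.
  intros [H1 H2] [H3 H4]. split.
  - rewrite (src_vcomp _ HC); congruence.
  - rewrite (tgt_vcomp _ HC); congruence.
Qed.

Lemma is2_h {a b c : ob C} (f g : hom a b) (f' g' : hom b c) (α : cell a b) (β : cell b c) :
  is2 f g α -> is2 f' g' β -> is2 (f' ∘ f) (g' ∘ g) (β ⋆ α).
Proof.
  intros [H1 H2] [H3 H4]. split.
  - rewrite (src_hcomp _ HC); congruence.
  - rewrite (tgt_hcomp _ HC); congruence.
Qed.

Lemma is2_eq {a b : ob C} (f g f' g' : hom a b) (α : cell a b) :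
  is2 f g α -> f = f' -> g = g' -> is2 f' g' α.
Proof. intros H -> ->; exact H. Qed.

Lemma vid_l {a b : ob C} (f g : hom a b) (α : cell a b) : is2 f g α -> id2 g · α = α.
Proof. intros [_ H]. rewrite <- H. apply (vcomp_id_l _ HC). Qed.

Lemma vid_r {a b : ob C} (f g : hom a b) (α : cell a b) : is2 f g α -> α · id2 f = α.
Proof. intros [H _]. rewrite <- H. apply (vcomp_id_r _ HC). Qed.

Lemma vassoc {a b : ob C} (f g h i : hom a b) (α β γ : cell a b) :
  is2 f g α -> is2 g h β -> is2 h i γ -> γ · (β · α) = (γ · β) · α.
Proof. intros [_ H1] [H2 H3] [H4 _]. apply (vcomp_assoc _ HC); congruence. Qed.

Lemma idid {a b : ob C} (k : hom a b) : id2 k · id2 k = id2 k.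
Proof. apply (vid_l k k), is2_id. Qed.

Lemma wl_v {a b c : ob C} (k : hom b c) (f g h : hom a b) (α β : cell a b) :
  is2 f g α -> is2 g h β -> id2 k ⋆ (β · α) = (id2 k ⋆ β) · (id2 k ⋆ α).
Proof.
  intros [_ H1] [H2 _]. rewrite <- (idid k) at 1.
  apply (interchange _ HC); [congruence | rewrite (src_id2 _ HC), (tgt_id2 _ HC); reflexivity].
Qed.

Lemma wr_v {a b c : ob C} (k : hom a b) (f g h : hom b c) (α β : cell b c) :
  is2 f g α -> is2 g h β -> (β · α) ⋆ id2 k = (β ⋆ id2 k) · (α ⋆ id2 k).
Proof.
  intros [_ H1] [H2 _]. rewrite <- (idid k) at 1.
  apply (interchange _ HC); [rewrite (src_id2 _ HC), (tgt_id2 _ HC); reflexivity | congruence].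
Qed.

Lemma nat1 {a b c : ob C} (f f' : hom b c) (g g' : hom a b) (α : cell b c) (β : cell a b) :
  is2 f f' α -> is2 g g' β -> α ⋆ β = (α ⋆ id2 g') · (id2 f ⋆ β).
Proof.
  intros Ha Hb. rewrite <- (vid_r _ _ _ Ha) at 1. rewrite <- (vid_l _ _ _ Hb) at 1.
  apply (interchange _ HC).
  - destruct Hb as [_ H]; rewrite H, (src_id2 _ HC); reflexivity.
  - destruct Ha as [H _]; rewrite H, (tgt_id2 _ HC); reflexivity.
Qed.

Lemma nat2 {a b c : ob C} (f f' : hom b c) (g g' : hom a b) (α : cell b c) (β : cell a b) :
  is2 f f' α -> is2 g g' β -> α ⋆ β = (id2 f' ⋆ β) · (α ⋆ id2 g).
Proof.
  intros Ha Hb. rewrite <- (vid_l _ _ _ Ha) at 1. rewrite <- (vid_r _ _ _ Hb) at 1.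
  apply (interchange _ HC).
  - destruct Hb as [H _]; rewrite H, (tgt_id2 _ HC); reflexivity.
  - destruct Ha as [_ H]; rewrite H, (src_id2 _ HC); reflexivity.
Qed.

Lemma natsq {a b c : ob C} (f f' : hom b c) (g g' : hom a b) (α : cell b c) (β : cell a b) :
  is2 f f' α -> is2 g g' β -> (α ⋆ id2 g') · (id2 f ⋆ β) = (id2 f' ⋆ β) · (α ⋆ id2 g).
Proof. intros Ha Hb. rewrite <- (nat1 _ _ _ _ _ _ Ha Hb). apply (nat2 _ _ _ _ _ _ Ha Hb). Qed.

Lemma wlwl {a b c d : ob C} (f : hom c d) (g : hom b c) (α : cell a b) :
  id2 f ⋆ (id2 g ⋆ α) = id2 (f ∘ g) ⋆ α.
Proof. rewrite (hcomp_assoc _ HC), (hcomp_id2 _ HC). reflexivity. Qed.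

Lemma wrwr {a b c d : ob C} (f : hom a b) (g : hom b c) (α : cell c d) :
  (α ⋆ id2 g) ⋆ id2 f = α ⋆ id2 (g ∘ f).
Proof. rewrite <- (hcomp_assoc _ HC), (hcomp_id2 _ HC). reflexivity. Qed.

Lemma wlwr {a b c d : ob C} (f : hom c d) (g : hom a b) (α : cell b c) :
  id2 f ⋆ (α ⋆ id2 g) = (id2 f ⋆ α) ⋆ id2 g.
Proof. apply (hcomp_assoc _ HC). Qed.

Lemma eu_iff {X : Type} (P Q : X -> Prop) : (forall x, P x <-> Q x) -> ((exists! x, P x) <-> (exists! x, Q x)).
Proof.
  intros H; split; intros [x [Hx U]]; exists x; split; try apply H; auto;
  intros y Hy; apply U, H, Hy.
Qed.

End Gen.

Section Core.
Context {C : TwoCatData} (HC : IsTwoCat C).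

Lemma cA {a b c d : ob C} (f : hom a b) (g : hom b c) (h : hom c d) : (h ∘ g) ∘ f = h ∘ (g ∘ f).
Proof. symmetry; apply (comp1_assoc _ HC). Qed.
Lemma cidl {a b : ob C} (f : hom a b) : id1 b ∘ f = f.
Proof. apply (comp1_id_l _ HC). Qed.
Lemma cidr {a b : ob C} (f : hom a b) : f ∘ id1 a = f.
Proof. apply (comp1_id_r _ HC). Qed.
Lemma ext1 {a b c d : ob C} (A : hom c d) (B : hom b c) (R : hom b d) :
  A ∘ B = R -> forall (x : hom a b), A ∘ (B ∘ x) = R ∘ x.
Proof. intros H x. rewrite <- H. apply (comp1_assoc _ HC). Qed.

Lemma is2_v' {a b : ob C} (f g g' h : hom a b) (α β : cell a b) :
  is2 f g α -> is2 g' h β -> g = g' -> is2 f h (β · α).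
Proof. intros H1 H2 ->. eapply is2_v; eauto. Qed.

Ltac ty0 := match goal with
  | |- is2 _ _ (_ · _) => eapply is2_v'; [ty0 | ty0 | ]
  | |- is2 _ _ (id2 _) => apply (is2_id HC)
  | |- is2 _ _ (_ ⋆ _) => eapply (is2_h HC); [ty0 | ty0]
  | |- is2 _ _ _ => eassumption
  end.

Context (e b : ob C) (p : hom e b)
  (bb : ob C) (d0 d1 : hom b bb) (al : cell e bb)
  (bbb : ob C) (D0 D1 D2 : hom bb bbb) (s0 : hom bb b)
  (Hal : is2 (d1 ∘ p) (d0 ∘ p) al)
  (Hop2 : forall y : ob C, forall (h h' : hom bb y) (ξ0 ξ1 : cell b y),
       is2 (h ∘ d0) (h' ∘ d0) ξ0 -> is2 (h ∘ d1) (h' ∘ d1) ξ1 ->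
       (ξ0 ⋆ id2 p) · (id2 h ⋆ al) = (id2 h' ⋆ al) · (ξ1 ⋆ id2 p) ->
       exists! ξ : cell bb y, is2 h h' ξ /\ ξ ⋆ id2 d0 = ξ0 /\ ξ ⋆ id2 d1 = ξ1)
  (Hop1 : forall y : ob C, forall (h0 h1 : hom b y) (β : cell e y), is2 (h1 ∘ p) (h0 ∘ p) β ->
       exists! h : hom bb y, h ∘ d0 = h0 /\ h ∘ d1 = h1 /\ id2 h ⋆ al = β)
  (HD2D0 : D2 ∘ d0 = D0 ∘ d1)
  (Hpo1 : forall y : ob C, forall (k0 : hom bb y) (k1 : hom bb y), k0 ∘ d0 = k1 ∘ d1 ->
       exists! k : hom bbb y, k ∘ D2 = k0 /\ k ∘ D0 = k1)
  (Hpo2 : forall y : ob C, forall (k k' : hom bbb y) (ξ0 : cell bb y) (ξ1 : cell bb y),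
       is2 (k ∘ D2) (k' ∘ D2) ξ0 -> is2 (k ∘ D0) (k' ∘ D0) ξ1 ->
       ξ0 ⋆ id2 d0 = ξ1 ⋆ id2 d1 ->
       exists! ξ : cell bbb y, is2 k k' ξ /\ ξ ⋆ id2 D2 = ξ0 /\ ξ ⋆ id2 D0 = ξ1)
  (HD1d1 : D1 ∘ d1 = D2 ∘ d1) (HD1d0 : D1 ∘ d0 = D0 ∘ d0)
  (HD1al : id2 D1 ⋆ al = (id2 D0 ⋆ al) · (id2 D2 ⋆ al))
  (Hs0d0 : s0 ∘ d0 = id1 b) (Hs0d1 : s0 ∘ d1 = id1 b) (Hs0al : id2 s0 ⋆ al = id2 p)
  (t : hom b b) (γ : cell e b)
  (Hγ : is2 (t ∘ p) p γ)
  (Hkan : forall (k : hom b b) (θ : cell e b), is2 (k ∘ p) p θ ->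
    exists! β : cell b b, is2 k t β /\ γ · (β ⋆ id2 p) = θ)
  (m η : cell b b)
  (Hm : is2 (t ∘ t) t m) (Hme : γ · (m ⋆ id2 p) = γ · (id2 t ⋆ γ))
  (Hη : is2 (id1 b) t η) (Hηe : γ · (η ⋆ id2 p) = id2 p)
  (ah : cell b bb) (Hah : is2 d1 (d0 ∘ t) ah) (Hahe : (id2 d0 ⋆ γ) · (ah ⋆ id2 p) = al)
  (kk : hom bb b) (Hkd0 : kk ∘ d0 = id1 b) (Hkd1 : kk ∘ d1 = t) (Hkal : id2 kk ⋆ al = γ).

Ltac eqs := repeat progress (rewrite ?cA, ?cidl, ?cidr, ?Hkd0, ?Hkd1, ?HD2D0, ?HD1d0, ?HD1d1,
   ?Hs0d0, ?Hs0d1, ?(ext1 _ _ _ Hkd0), ?(ext1 _ _ _ Hkd1), ?(ext1 _ _ _ HD2D0),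
   ?(ext1 _ _ _ HD1d0), ?(ext1 _ _ _ HD1d1), ?(ext1 _ _ _ Hs0d0), ?(ext1 _ _ _ Hs0d1)); reflexivity.

Ltac ty := eapply is2_eq; [ty0 | eqs | eqs]; eqs.

Lemma Hpd0 : is2 (d0 ∘ t ∘ p) (d0 ∘ p) (id2 d0 ⋆ γ).
Proof. ty. Qed.

Lemma hid_l {a c : ob C} (α : cell a c) : id2 (id1 c) ⋆ α = α.
Proof. apply (hcomp_id_l _ HC). Qed.

Lemma kah : id2 kk ⋆ ah = id2 t.
Proof.
  assert (Hγ' : is2 (t ∘ p) p γ) by exact Hγ.
  destruct (Hkan t γ Hγ') as [β0 [_ U]].
  rewrite <- (U (id2 kk ⋆ ah)), <- (U (id2 t)); [reflexivity | | ].
  - split; [apply (is2_id HC) |]. rewrite (hcomp_id2 _ HC). eapply vid_r; eauto.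
  - split; [ty |].
    transitivity (id2 kk ⋆ al); [| exact Hkal].
    rewrite <- Hahe. erewrite (wl_v HC) by ty.
    rewrite (wlwl HC), Hkd0, hid_l, (wlwr HC). reflexivity.
Qed.

Lemma s0ah : id2 s0 ⋆ ah = η.
Proof.
  assert (Hp : is2 (id1 b ∘ p) p (id2 p)) by ty.
  destruct (Hkan (id1 b) (id2 p) Hp) as [β0 [_ U]].
  rewrite <- (U (id2 s0 ⋆ ah)), <- (U η); [reflexivity | | ].
  - split; [exact Hη | exact Hηe].
  - split; [ty |].
    transitivity (id2 s0 ⋆ al); [| exact Hs0al].
    rewrite <- Hahe. erewrite (wl_v HC) by ty.
    rewrite (wlwl HC), Hs0d0, hid_l, (wlwr HC). reflexivity.
Qed.

Definition Phi {y : ob C} (h : hom y b) (β : cell y b) : cell y bb :=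
  (id2 d0 ⋆ β) · (ah ⋆ id2 h).

Lemma Phi_is2 {y : ob C} (h : hom y b) (β : cell y b) :
  is2 (t ∘ h) h β -> is2 (d1 ∘ h) (d0 ∘ h) (Phi h β).
Proof. intros. unfold Phi. ty. Qed.

Ltac ty0 ::= match goal with
  | |- is2 _ _ (_ · _) => eapply is2_v'; [ty0 | ty0 | ]
  | |- is2 _ _ (id2 _) => apply (is2_id HC)
  | |- is2 _ _ (_ ⋆ _) => eapply (is2_h HC); [ty0 | ty0]
  | |- is2 _ _ (Phi _ _) => eapply Phi_is2; ty0
  | |- is2 _ _ _ => eassumption
  end.

Lemma kPhi {y : ob C} (h : hom y b) (β : cell y b) :
  is2 (t ∘ h) h β -> id2 kk ⋆ Phi h β = β.
Proof.
  intros Hb. unfold Phi. erewrite (wl_v HC) by ty.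
  rewrite (wlwl HC), Hkd0, hid_l, (wlwr HC), kah, (hcomp_id2 _ HC).
  eapply vid_r; eauto.
Qed.

Lemma unit_iff {y : ob C} (h : hom y b) (β : cell y b) :
  is2 (t ∘ h) h β -> id2 s0 ⋆ Phi h β = β · (η ⋆ id2 h).
Proof.
  intros Hb. unfold Phi. erewrite (wl_v HC) by ty.
  rewrite (wlwl HC), Hs0d0, hid_l, (wlwr HC), s0ah. reflexivity.
Qed.

Lemma Phi_nat {y z : ob C} (h : hom y b) (g : hom z y) (β : cell y b) :
  is2 (t ∘ h) h β -> Phi (h ∘ g) (β ⋆ id2 g) = Phi h β ⋆ id2 g.
Proof.
  intros Hb. unfold Phi. erewrite (wr_v HC) by ty.
  rewrite (wlwr HC), (wrwr HC). reflexivity.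
Qed.

Lemma mor_iff {y : ob C} (h1 h0 : hom y b) (β1 β0 ξ : cell y b) :
  is2 (t ∘ h1) h1 β1 -> is2 (t ∘ h0) h0 β0 -> is2 h1 h0 ξ ->
  (ξ · β1 = β0 · (id2 t ⋆ ξ) <->
   (Phi h0 β0) · (id2 d1 ⋆ ξ) = (id2 d0 ⋆ ξ) · (Phi h1 β1)).
Proof.
  intros Hb1 Hb0 Hx. split.
  - intros Hc. unfold Phi.
    rewrite <- (vassoc HC (d1 ∘ h1) (d1 ∘ h0) (d0 ∘ t ∘ h0) (d0 ∘ h0)) by ty.
    rewrite (natsq HC d1 (d0 ∘ t) h1 h0 ah ξ Hah Hx).
    rewrite (vassoc HC (d1 ∘ h1) (d0 ∘ t ∘ h1) (d0 ∘ t ∘ h0) (d0 ∘ h0)) by ty.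
    rewrite <- (wlwl HC).
    rewrite <- (wl_v HC d0 (t ∘ h1) (t ∘ h0) h0) by ty.
    rewrite <- Hc.
    rewrite (wl_v HC d0 (t ∘ h1) h1 h0) by ty.
    rewrite (vassoc HC (d1 ∘ h1) (d0 ∘ t ∘ h1) (d0 ∘ h1) (d0 ∘ h0)) by ty.
    reflexivity.
  - intros Hd. apply (f_equal (hcomp (id2 kk))) in Hd.
    erewrite !(wl_v HC) in Hd by ty.
    rewrite !kPhi in Hd by assumption.
    rewrite !(wlwl HC), Hkd1, Hkd0, hid_l in Hd. symmetry; exact Hd.
Qed.

Lemma ex_ω0 : exists ω0 : cell bb bb, is2 (id1 bb) (d0 ∘ kk) ω0 /\
  ω0 ⋆ id2 d0 = id2 d0 /\ ω0 ⋆ id2 d1 = ah.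
Proof.
  destruct (Hop2 bb (id1 bb) (d0 ∘ kk) (id2 d0) ah) as [ω [[H1 [H2 H3]] _]];
    [ty | ty | | exists ω; auto].
  rewrite (hcomp_id2 _ HC), hid_l, (vid_l HC _ _ _ Hal).
  rewrite <- (wlwl HC), Hkal, Hahe. reflexivity.
Qed.

Lemma ex_Q : exists Q : hom bbb b, Q ∘ D2 = t ∘ kk /\ Q ∘ D0 = kk.
Proof.
  destruct (Hpo1 b (t ∘ kk) kk) as [Q [[H1 H2] _]]; [eqs | exists Q; auto].
Qed.

Section W0.
Context (ω0 : cell bb bb) (Hω0 : is2 (id1 bb) (d0 ∘ kk) ω0)
  (Hω0d0 : ω0 ⋆ id2 d0 = id2 d0) (Hω0d1 : ω0 ⋆ id2 d1 = ah).

Lemma Phik {y : ob C} (h : hom y b) (β : cell y bb) :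
  is2 (d1 ∘ h) (d0 ∘ h) β -> Phi h (id2 kk ⋆ β) = β.
Proof.
  intros Hb.
  pose proof (natsq HC (id1 bb) (d0 ∘ kk) (d1 ∘ h) (d0 ∘ h) ω0 β Hω0 Hb) as E.
  rewrite <- (hcomp_id2 _ HC _ _ _ h d0), <- (hcomp_id2 _ HC _ _ _ h d1) in E.
  rewrite !(hcomp_assoc _ HC) in E.
  rewrite Hω0d0, Hω0d1, (hcomp_id2 _ HC), hid_l in E.
  rewrite (vid_l HC _ _ _ Hb) in E. unfold Phi. rewrite (wlwl HC). symmetry; exact E.
Qed.

Section WQ.
Context (Q : hom bbb b) (HQD2 : Q ∘ D2 = t ∘ kk) (HQD0 : Q ∘ D0 = kk).

Ltac eqs ::= repeat progress (rewrite ?cA, ?cidl, ?cidr, ?Hkd0, ?Hkd1, ?HD2D0, ?HD1d0, ?HD1d1,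
   ?Hs0d0, ?Hs0d1, ?HQD2, ?HQD0, ?(ext1 _ _ _ Hkd0), ?(ext1 _ _ _ Hkd1), ?(ext1 _ _ _ HD2D0),
   ?(ext1 _ _ _ HD1d0), ?(ext1 _ _ _ HD1d1), ?(ext1 _ _ _ Hs0d0), ?(ext1 _ _ _ Hs0d1),
   ?(ext1 _ _ _ HQD2), ?(ext1 _ _ _ HQD0)); reflexivity.

Lemma ex_ω1 : exists ω1 : cell bb b, is2 (Q ∘ D1) kk ω1 /\
  ω1 ⋆ id2 d0 = id2 (id1 b) /\ ω1 ⋆ id2 d1 = m.
Proof.
  destruct (Hop2 b (Q ∘ D1) kk (id2 (id1 b)) m) as [ω [[H1 [H2 H3]] _]];
    [ty | ty | | exists ω; auto].
  rewrite hid_l. rewrite (vid_l HC (Q ∘ D1 ∘ d1 ∘ p) p) by ty.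
  rewrite <- (wlwl HC), HD1al. erewrite (wl_v HC) by ty.
  rewrite !(wlwl HC), HQD0, HQD2, Hkal, <- (wlwl HC), Hkal. symmetry; exact Hme.
Qed.

Lemma ex_ω2 : exists ω2 : cell bbb bbb, is2 (id1 bbb) (D0 ∘ (d0 ∘ Q)) ω2 /\
  ω2 ⋆ id2 D0 = id2 D0 ⋆ ω0.
Proof.
  destruct (Hop2 bbb D2 ((D0 ∘ (d0 ∘ t)) ∘ kk) (id2 D0 ⋆ ah)
     ((id2 D0 ⋆ (ah ⋆ id2 t)) · (id2 D2 ⋆ ah))) as [ξ0 [[H1 [H2 H3]] _]];
    [ty | ty | | ].
  - rewrite <- (wlwl HC), Hkal.
    assert (E1 : (id2 (D0 ∘ (d0 ∘ t)) ⋆ γ) · ((id2 D0 ⋆ (ah ⋆ id2 t)) ⋆ id2 p) =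
                 (id2 D0 ⋆ (ah ⋆ id2 p)) · (id2 (D0 ∘ d1) ⋆ γ)).
    { rewrite <- (wlwr HC), (wrwr HC), <- (wlwl HC).
      rewrite <- (wl_v HC D0 (d1 ∘ t ∘ p) (d0 ∘ t ∘ t ∘ p) (d0 ∘ t ∘ p)) by ty.
      rewrite <- (nat2 HC _ _ _ _ ah γ Hah Hγ), (nat1 HC _ _ _ _ ah γ Hah Hγ).
      rewrite (wl_v HC D0 (d1 ∘ t ∘ p) (d1 ∘ p) (d0 ∘ t ∘ p)) by ty.
      rewrite (wlwl HC). reflexivity. }
    assert (E2 : (id2 (D0 ∘ d1) ⋆ γ) · ((id2 D2 ⋆ ah) ⋆ id2 p) = id2 D2 ⋆ al).
    { rewrite <- HD2D0, <- (wlwl HC), <- (wlwr HC).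
      rewrite <- (wl_v HC D2 (d1 ∘ p) (d0 ∘ t ∘ p) (d0 ∘ p)) by ty.
      rewrite Hahe. reflexivity. }
    erewrite (wr_v HC) by ty.
    rewrite (vassoc HC (D2 ∘ d1 ∘ p) (D0 ∘ d1 ∘ t ∘ p) (D0 ∘ d0 ∘ t ∘ t ∘ p) (D0 ∘ d0 ∘ t ∘ p)) by ty.
    rewrite E1.
    rewrite <- (vassoc HC (D2 ∘ d1 ∘ p) (D0 ∘ d1 ∘ t ∘ p) (D0 ∘ d1 ∘ p) (D0 ∘ d0 ∘ t ∘ p)) by ty.
    rewrite E2, (wlwr HC). reflexivity.
  - destruct (Hpo2 bbb (id1 bbb) (D0 ∘ (d0 ∘ Q)) ξ0 (id2 D0 ⋆ ω0)) as [ω [[G1 [G2 G3]] _]];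
      [ty | ty | | exists ω; auto].
    rewrite H2, <- (hcomp_assoc _ HC), Hω0d1. reflexivity.
Qed.

Context  (ω1 : cell bb b) (Hω1 : is2 (Q ∘ D1) kk ω1)
  (Hω1d0 : ω1 ⋆ id2 d0 = id2 (id1 b)) (Hω1d1 : ω1 ⋆ id2 d1 = m)
  (ω2 : cell bbb bbb) (Hω2 : is2 (id1 bbb) (D0 ∘ (d0 ∘ Q)) ω2)
  (Hω2D0 : ω2 ⋆ id2 D0 = id2 D0 ⋆ ω0).

Ltac eqs ::= repeat progress (rewrite ?cA, ?cidl, ?cidr, ?Hkd0, ?Hkd1, ?HD2D0, ?HD1d0, ?HD1d1,
   ?Hs0d0, ?Hs0d1, ?HQD2, ?HQD0, ?(ext1 _ _ _ Hkd0), ?(ext1 _ _ _ Hkd1), ?(ext1 _ _ _ HD2D0),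
   ?(ext1 _ _ _ HD1d0), ?(ext1 _ _ _ HD1d1), ?(ext1 _ _ _ Hs0d0), ?(ext1 _ _ _ Hs0d1),
   ?(ext1 _ _ _ HQD2), ?(ext1 _ _ _ HQD0)); reflexivity.

Lemma Qcoc {y : ob C} (h : hom y b) (β : cell y bb) :
  is2 (d1 ∘ h) (d0 ∘ h) β ->
  id2 Q ⋆ ((id2 D0 ⋆ β) · (id2 D2 ⋆ β)) = (id2 kk ⋆ β) · (id2 t ⋆ (id2 kk ⋆ β)).
Proof.
  intros Hb. erewrite (wl_v HC) by ty.
  rewrite !(wlwl HC), HQD0, HQD2, <- (wlwl HC). reflexivity.
Qed.

Lemma QD1 {y : ob C} (h : hom y b) (β : cell y bb) :
  is2 (d1 ∘ h) (d0 ∘ h) β ->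
  id2 Q ⋆ (id2 D1 ⋆ β) = (id2 kk ⋆ β) · (m ⋆ id2 h).
Proof.
  intros Hb. rewrite (wlwl HC).
  pose proof (natsq HC (Q ∘ D1) kk (d1 ∘ h) (d0 ∘ h) ω1 β Hω1 Hb) as E.
  rewrite <- (hcomp_id2 _ HC _ _ _ h d0), <- (hcomp_id2 _ HC _ _ _ h d1) in E.
  rewrite !(hcomp_assoc _ HC) in E.
  rewrite Hω1d0, Hω1d1, hid_l in E.
  rewrite <- E. symmetry. eapply (vid_l HC). ty.
Qed.

Lemma ω2D {y : ob C} (h : hom y b) : ω2 ⋆ id2 (D0 ∘ (d0 ∘ h)) = id2 (D0 ∘ (d0 ∘ h)).
Proof.
  rewrite <- (hcomp_id2 _ HC _ _ _ (d0 ∘ h) D0), <- (hcomp_id2 _ HC _ _ _ h d0).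
  rewrite !(hcomp_assoc _ HC). rewrite Hω2D0.
  rewrite <- (hcomp_assoc _ HC _ _ _ _ (id2 d0) ω0 (id2 D0)), Hω0d0. reflexivity.
Qed.

Lemma Xrep {y : ob C} (h : hom y b) (X : cell y bbb) :
  is2 (D2 ∘ (d1 ∘ h)) (D0 ∘ (d0 ∘ h)) X ->
  X = (id2 D0 ⋆ (id2 d0 ⋆ (id2 Q ⋆ X))) · (ω2 ⋆ id2 (D2 ∘ (d1 ∘ h))).
Proof.
  intros HX.
  pose proof (natsq HC (id1 bbb) (D0 ∘ (d0 ∘ Q)) _ _ ω2 X Hω2 HX) as E.
  rewrite ω2D, hid_l, (vid_l HC _ _ _ HX) in E. rewrite E at 1.
  rewrite (wlwl HC d0 Q), (wlwl HC D0). reflexivity.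
Qed.

Lemma Qinj {y : ob C} (h : hom y b) (X Y : cell y bbb) :
  is2 (D2 ∘ (d1 ∘ h)) (D0 ∘ (d0 ∘ h)) X ->
  is2 (D2 ∘ (d1 ∘ h)) (D0 ∘ (d0 ∘ h)) Y ->
  id2 Q ⋆ X = id2 Q ⋆ Y -> X = Y.
Proof.
  intros HX HY E. rewrite (Xrep h X HX), (Xrep h Y HY), E. reflexivity.
Qed.

Lemma coc_iff {y : ob C} (h : hom y b) (β : cell y b) :
  is2 (t ∘ h) h β ->
  ((id2 D0 ⋆ Phi h β) · (id2 D2 ⋆ Phi h β) = id2 D1 ⋆ Phi h β <->
   β · (id2 t ⋆ β) = β · (m ⋆ id2 h)).
Proof.
  intros Hb. assert (Hp : is2 (d1 ∘ h) (d0 ∘ h) (Phi h β)) by (apply Phi_is2; exact Hb).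
  split.
  - intros Hc. apply (f_equal (hcomp (id2 Q))) in Hc.
    rewrite (Qcoc h _ Hp), (QD1 h _ Hp), (kPhi h β Hb) in Hc. exact Hc.
  - intros Ha. apply (Qinj h); [ty | ty |].
    rewrite (Qcoc h _ Hp), (QD1 h _ Hp), (kPhi h β Hb). exact Ha.
Qed.

Lemma Alg_Desc {y : ob C} (h : hom y b) (β : cell y b) :
  is2 (t ∘ h) h β ->
  (in_Alg t m η y h β <-> in_Desc d0 d1 D0 D1 D2 s0 y h (Phi h β)).
Proof.
  intros Hb. unfold in_Alg, in_Desc.
  rewrite (coc_iff h β Hb), (unit_iff h β Hb).
  split; intros [_ [A U]]; (split; [ty | split; assumption]).
Qed.

Lemma Desc_Alg {y : ob C} (h : hom y b) (β : cell y bb) :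
  is2 (d1 ∘ h) (d0 ∘ h) β ->
  (in_Desc d0 d1 D0 D1 D2 s0 y h β <-> in_Alg t m η y h (id2 kk ⋆ β)).
Proof.
  intros Hb. rewrite (Alg_Desc h (id2 kk ⋆ β)) by ty. rewrite (Phik h β Hb). reflexivity.
Qed.

Section Obj.
Context (X : ob C) (u : hom X b) (μ : cell X b) (Hμ : is2 (t ∘ u) u μ).

Lemma sub1 {y : ob C} (g : hom y X) (β : cell y bb) :
  is2 (d1 ∘ (u ∘ g)) (d0 ∘ (u ∘ g)) β ->
  (μ ⋆ id2 g = id2 kk ⋆ β <-> Phi u μ ⋆ id2 g = β).
Proof.
  intros Hb. split.
  - intros E. rewrite <- (Phi_nat u g μ Hμ), E. apply Phik. exact Hb.
  - intros E. rewrite <- E, <- (Phi_nat u g μ Hμ), kPhi by ty. reflexivity.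
Qed.

Lemma cond_iff {y : ob C} (g1 g0 : hom y X) (ξ : cell y b) :
  is2 (u ∘ g1) (u ∘ g0) ξ ->
  (ξ · (μ ⋆ id2 g1) = (μ ⋆ id2 g0) · (id2 t ⋆ ξ) <->
   (Phi u μ ⋆ id2 g0) · (id2 d1 ⋆ ξ) = (id2 d0 ⋆ ξ) · (Phi u μ ⋆ id2 g1)).
Proof.
  intros Hx. rewrite (mor_iff (u ∘ g1) (u ∘ g0) (μ ⋆ id2 g1) (μ ⋆ id2 g0) ξ) by ty.
  rewrite !(Phi_nat u _ μ Hμ). reflexivity.
Qed.

Lemma EM_LD :
  is_EM_object t m η X u μ <-> is_lax_descent_object d0 d1 D0 D1 D2 s0 X u (Phi u μ).
Proof.
  unfold is_EM_object, is_lax_descent_object.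
  split; intros [H0 H]; (split; [apply (Alg_Desc u μ Hμ); exact H0 |]);
    intros y; destruct (H y) as [H1 H2]; split.
  - intros h β Hd. assert (Hb : is2 (d1 ∘ h) (d0 ∘ h) β) by apply Hd.
    apply (Desc_Alg h β Hb) in Hd. specialize (H1 h _ Hd).
    revert H1. apply eu_iff. intros g. split; intros [E1 E2]; subst h; split; auto;
      apply (sub1 g β Hb); exact E2.
  - intros g1 g0 ξ Hx Hc. apply H2; [exact Hx |]. apply (cond_iff g1 g0 ξ Hx). exact Hc.
  - intros h β Ha. assert (Hb : is2 (t ∘ h) h β) by apply Ha.
    apply (Alg_Desc h β Hb) in Ha. specialize (H1 h _ Ha).
    revert H1. apply eu_iff. intros g. split; intros [E1 E2]; subst h; split; auto.
    + apply (sub1 g (Phi (u ∘ g) β)); [ty |]. rewrite kPhi by exact Hb. exact E2.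
    + apply (sub1 g (Phi (u ∘ g) β)) in E2; [| ty]. rewrite kPhi in E2 by exact Hb. exact E2.
  - intros g1 g0 ξ Hx Hc. apply H2; [exact Hx |]. apply (cond_iff g1 g0 ξ Hx). exact Hc.
Qed.

End Obj.

Lemma iso_part (bT : ob C) (u : hom bT b) (μ : cell bT b)
  (L : ob C) (d : hom L b) (Ψ : cell L bb) (pT : hom e bT) (pH : hom e L) :
  is_EM_object t m η bT u μ ->
  is_lax_descent_object d0 d1 D0 D1 D2 s0 L d Ψ ->
  u ∘ pT = p -> μ ⋆ id2 pT = γ -> d ∘ pH = p -> Ψ ⋆ id2 pH = al ->
  exists φ : hom L bT, is_iso1 φ /\ u ∘ φ = d /\ φ ∘ pH = pT.
Proof.
  intros [HA HEMu] [HD HLDu] EpT EμT EpH EΨH.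
  assert (Hμ : is2 (t ∘ u) u μ) by apply HA.
  assert (HΨ : is2 (d1 ∘ d) (d0 ∘ d) Ψ) by apply HD.
  destruct ((proj1 (HEMu L)) d (id2 kk ⋆ Ψ) (proj1 (Desc_Alg d Ψ HΨ) HD))
    as [φ [[Eφ1 Eφ2] _]].
  destruct ((proj1 (HLDu bT)) u (Phi u μ) (proj1 (Alg_Desc u μ Hμ) HA))
    as [ψ [[Eψ1 Eψ2] _]].
  exists φ. split; [exists ψ; split | split; [exact Eφ1 |]].
  - destruct ((proj1 (HLDu L)) d Ψ HD) as [g0 [_ U]].
    rewrite <- (U (ψ ∘ φ)), <- (U (id1 L)); [reflexivity | |].
    + split; [apply cidr | apply (hcomp_id_r _ HC)].
    + split.
      * rewrite (comp1_assoc _ HC), Eψ1. exact Eφ1.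
      * rewrite <- (wrwr HC), Eψ2, <- (Phi_nat u φ μ Hμ), Eφ2, Eφ1.
        apply Phik. exact HΨ.
  - destruct ((proj1 (HEMu bT)) u μ HA) as [g0 [_ U]].
    rewrite <- (U (φ ∘ ψ)), <- (U (id1 bT)); [reflexivity | |].
    + split; [apply cidr | apply (hcomp_id_r _ HC)].
    + split.
      * rewrite (comp1_assoc _ HC), Eφ1. exact Eψ1.
      * rewrite <- (wrwr HC), Eφ2, <- (wlwr HC), Eψ2. apply kPhi. exact Hμ.
  - assert (HγA : in_Alg t m η e p γ).
    { split; [exact Hγ | split; [symmetry; exact Hme | exact Hηe]]. }
    destruct ((proj1 (HEMu e)) p γ HγA) as [g0 [_ U]].
    rewrite <- (U (φ ∘ pH)), <- (U pT); [reflexivity | |].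
    + split; assumption.
    + split.
      * rewrite (comp1_assoc _ HC), Eφ1. exact EpH.
      * rewrite <- (wrwr HC), Eφ2, <- (wlwr HC), EΨH. exact Hkal.
Qed.

End WQ.

End W0.

End Core.

Theorem theorem4p8 (C : TwoCatData) (HC : IsTwoCat C)
  (e b : ob C) (p : hom e b)
  (bb : ob C) (d0 d1 : hom b bb) (al : cell e bb)
  (bbb : ob C) (D0 D1 D2 : hom bb bbb) (s0 : hom bb b)
  (Hcok : is_2cokernel_diagram p bb d0 d1 al bbb D0 D1 D2 s0)
  (t : hom b b) (γ : cell e b)
  (Hkan : is_right_kan p p t γ)
  (Hpres : is_right_kan (d0 ∘ p) p (d0 ∘ t) (id2 d0 ⋆ γ))
  (m η : cell b b)
  (Hm : is_codensity_mult p t γ m) (Hη : is_codensity_unit p t γ η) :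
  ((exists (bT : ob C) (u : hom bT b) (μ : cell bT b), is_EM_object t m η bT u μ) <->
   (exists (L : ob C) (d : hom L b) (Ψ : cell L bb),
       is_lax_descent_object d0 d1 D0 D1 D2 s0 L d Ψ)) /\
  (forall (bT : ob C) (u : hom bT b) (μ : cell bT b)
          (L : ob C) (d : hom L b) (Ψ : cell L bb)
          (pT : hom e bT) (pH : hom e L),
     is_EM_object t m η bT u μ ->
     is_lax_descent_object d0 d1 D0 D1 D2 s0 L d Ψ ->
     u ∘ pT = p -> μ ⋆ id2 pT = γ ->
     d ∘ pH = p -> Ψ ⋆ id2 pH = al ->
     exists φ : hom L bT, is_iso1 φ /\ u ∘ φ = d /\ φ ∘ pH = pT).
Proof.
  destruct Hcok as [[Hal Hop] [[HD2D0 Hpo] [[HD1d1 [HD1d0 HD1al]] [Hs0d0 [Hs0d1 Hs0al]]]]].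
  assert (Hop1 := fun y => proj1 (Hop y)). assert (Hop2 := fun y => proj2 (Hop y)).
  assert (Hpo1 := fun y => proj1 (Hpo y)). assert (Hpo2 := fun y => proj2 (Hpo y)).
  clear Hop Hpo.
  destruct Hkan as [Hγ Hkan]. destruct Hpres as [_ Hpres].
  destruct Hm as [Hm Hme]. destruct Hη as [Hη Hηe].
  destruct (Hpres d1 al Hal) as [ah [[Hah Hahe] _]].
  destruct (Hop1 b (id1 b) t γ) as [kk [[Hkd0 [Hkd1 Hkal]] _]].
  { rewrite (comp1_id_l _ HC). exact Hγ. }
  destruct (ex_ω0 HC e b p bb d0 d1 al Hal Hop2 t γ ah Hah Hahe kk Hkd0 Hkd1 Hkal)
    as [ω0 [Hω0 [Hω0d0 Hω0d1]]].
  destruct (ex_Q HC b bb d0 d1 bbb D0 D2 Hpo1 t kk Hkd0 Hkd1) as [Q [HQD2 HQD0]].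
  destruct (ex_ω1 HC e b p bb d0 d1 al bbb D0 D1 D2 Hal Hop2 HD2D0 HD1d1 HD1d0 HD1al
     t γ m Hm Hme kk Hkd0 Hkd1 Hkal Q HQD2 HQD0) as [ω1 [Hω1 [Hω1d0 Hω1d1]]].
  destruct (ex_ω2 HC e b p bb d0 d1 al bbb D0 D2 Hop2 HD2D0 Hpo2 t γ Hγ ah Hah Hahe
     kk Hkd0 Hkd1 Hkal ω0 Hω0 Hω0d1 Q HQD2 HQD0) as [ω2 [Hω2 Hω2D0]].
  pose proof (EM_LD HC e b p bb d0 d1 al bbb D0 D1 D2 s0 HD2D0 HD1d1 HD1d0 Hs0d0 Hs0d1 Hs0al
     t γ Hγ Hkan m η Hη Hηe ah Hah Hahe kk Hkd0 Hkd1 Hkal ω0 Hω0 Hω0d0 Hω0d1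
     Q HQD2 HQD0 ω1 Hω1 Hω1d0 Hω1d1 ω2 Hω2 Hω2D0) as EML.
  pose proof (iso_part HC e b p bb d0 d1 al bbb D0 D1 D2 s0 HD2D0 HD1d1 HD1d0 Hs0d0 Hs0d1 Hs0al
     t γ Hγ Hkan m η Hme Hη Hηe ah Hah Hahe kk Hkd0 Hkd1 Hkal ω0 Hω0 Hω0d0 Hω0d1
     Q HQD2 HQD0 ω1 Hω1 Hω1d0 Hω1d1 ω2 Hω2 Hω2D0) as ISO.
  split; [split | exact ISO].
  - intros [bT [u [μ H]]]. exists bT, u, (Phi b bb d0 ah u μ).
    apply (EML bT u μ); [apply H | exact H].
  - intros [L [d [Ψ H]]]. exists L, d, (id2 kk ⋆ Ψ).
    assert (HΨ : is2 (d1 ∘ d) (d0 ∘ d) Ψ) by apply H.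
    assert (Hμ : is2 (t ∘ d) d (id2 kk ⋆ Ψ)).
    { eapply is2_eq; [eapply (is2_h HC); [exact HΨ | apply (is2_id HC)] | |];
      rewrite (comp1_assoc _ HC); [rewrite Hkd1 | rewrite Hkd0, (comp1_id_l _ HC)]; reflexivity. }
    apply (EML L d _ Hμ).
    rewrite (Phik HC b bb d0 d1 ah kk ω0 Hω0 Hω0d0 Hω0d1 d Ψ HΨ). exact H.
Qed.
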